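(* Let $T_l$ be a $2m$ deck-shuffler IET. Then there is a $(2m-1)$-flower $F_l$ for $E_2$ such that $H_l([0,1))\subset F_l$.
   Context: $\mathbb{T}=\mathbb{R}/\mathbb{Z}\cong[0,1)$, $E_2(x)=2x\bmod1$. A $2m$ deck-shuffler IET $T_l$ is the map $[0,1)\to[0,1)$ determined by a length vector $l$ giving a partition of $[0,1)$ into consecutive left-closed right-open intervals $A_1<\dots<A_m<B_1<\dots<B_m$ of positive lengths, with $T_l(x)=x+|B_1|+\dots+|B_i|$ for $x\in A_i$ and $T_l(x)=x-|A_i|-\dots-|A_m|$ for $x\in B_i$. $B=B_1\cup\dots\cup B_m$ and $H_l(x)=\sum_{n=0}^\infty \chi_B(T_l^n x)/2^{n+1}$. A preimage selector for $E_2$ is a map $\eta:\mathbb{T}\to\mathbb{T}$ with $E_2(\eta(x))=x$ for all $x$, having finitely many discontinuities, each a jump discontinuity (both one-sided limits exist, differ, and one equals the value). A $p$-flower is $\overline{\eta(\mathbb{T})}$ for a preimage selector with exactly $p$ discontinuities. *)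

(* Defs.v *)
From Stdlib Require Import Reals List.
From Coquelicot Require Import Coquelicot.
Open Scope R_scope.

(* The circle T = R/Z is represented by reals; a point of T is a real mod 1.
   Circle distance between (the classes of) x and y. *)
Definition cdist (x y : R) : R :=
  Rmin (frac_part (x - y)) (1 - frac_part (x - y)).

Definition E2 (x : R) : R := frac_part (2 * x).

Fixpoint psum (f : nat -> R) (n : nat) : R :=
  match n with O => 0 | S k => psum f k + f k end.

Definition ind (p q x : R) : R :=
  if Rle_dec p x then (if Rlt_dec x q then 1 else 0) else 0.

(* Length vector of a 2m deck shuffler: a i = |A_(i+1)|, b i = |B_(i+1)|,
   for i = 0..m-1, all positive, total length 1. *)
Definition length_vector (m : nat) (a b : nat -> R) : Prop :=
  (1 <= m)%nat /\
  (forall i, (i < m)%nat -> 0 < a i) /\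
  (forall i, (i < m)%nat -> 0 < b i) /\
  psum a m + psum b m = 1.

(* A_(i+1) = [psum a i, psum a (i+1)),
   B_(i+1) = [|A| + psum b i, |A| + psum b (i+1)) with |A| = psum a m. *)
Definition Aint_lo (a : nat -> R) (i : nat) := psum a i.
Definition Aint_hi (a : nat -> R) (i : nat) := psum a (S i).
Definition Bint_lo (m : nat) (a b : nat -> R) (i : nat) := psum a m + psum b i.
Definition Bint_hi (m : nat) (a b : nat -> R) (i : nat) := psum a m + psum b (S i).

(* T_l(x) = x + |B_1|+...+|B_i| on A_i, x - |A_i| - ... - |A_m| on B_i. *)
Definition Tl (m : nat) (a b : nat -> R) (x : R) : R :=
  x + psum (fun i => ind (Aint_lo a i) (Aint_hi a i) x * psum b (S i)) m
    - psum (fun i => ind (Bint_lo m a b i) (Bint_hi m a b i) x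
                       * (psum a m - psum a i)) m.

Definition chiB (m : nat) (a b : nat -> R) (x : R) : R :=
  psum (fun i => ind (Bint_lo m a b i) (Bint_hi m a b i) x) m.

Definition Hl (m : nat) (a b : nat -> R) (x : R) : R :=
  Series (fun n => chiB m a b (Nat.iter n (Tl m a b) x) / 2 ^ (S n)).

(* eta is only looked at on [0,1), the fundamental domain of T. *)
Definition in01 (x : R) : Prop := 0 <= x < 1.

Definition preimage_selector (eta : R -> R) : Prop :=
  forall x, in01 x -> in01 (eta x) /\ E2 (eta x) = x.

Definition circ_continuous_at (eta : R -> R) (x : R) : Prop :=
  forall eps, 0 < eps -> exists delta, 0 < delta /\
    forall y, in01 y -> cdist y x < delta -> cdist (eta y) (eta x) < eps.

Definition circ_left_limit (eta : R -> R) (x L : R) : Prop :=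
  forall eps, 0 < eps -> exists delta, 0 < delta /\
    forall h, 0 < h < delta -> cdist (eta (frac_part (x - h))) L < eps.

Definition circ_right_limit (eta : R -> R) (x L : R) : Prop :=
  forall eps, 0 < eps -> exists delta, 0 < delta /\
    forall h, 0 < h < delta -> cdist (eta (frac_part (x + h))) L < eps.

Definition jump_discontinuity (eta : R -> R) (x : R) : Prop :=
  exists Lm Lp, circ_left_limit eta x Lm /\ circ_right_limit eta x Lp /\
    cdist Lm Lp <> 0 /\ (cdist Lm (eta x) = 0 \/ cdist Lp (eta x) = 0).

Definition exactly_p_jump_discontinuities (eta : R -> R) (p : nat) : Prop :=
  exists D : list R, NoDup D /\ length D = p /\
    (forall x, In x D -> in01 x /\ jump_discontinuity eta x) /\
    (forall x, in01 x -> ~ circ_continuous_at eta x -> In x D).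

Definition in_closure_image (eta : R -> R) (y : R) : Prop :=
  forall eps, 0 < eps -> exists x, in01 x /\ cdist (eta x) y < eps.

(* F is a p-flower: F = closure(eta(T)) for a preimage selector eta
   with exactly p discontinuities (F given as a predicate on reals, read mod 1) *)
Definition is_flower (p : nat) (F : R -> Prop) : Prop :=
  exists eta, preimage_selector eta /\ exactly_p_jump_discontinuities eta p /\
    forall y, F y <-> in_closure_image eta y.

(* Main.v *)
Require Import Defs.
From Stdlib Require Import Reals List Lia Lra Classical ZArith.
From Coquelicot Require Import Coquelicot.
Import Defs.
Open Scope R_scope.

Lemma psum_le (f : nat -> R) (n : nat) :
  (forall i, (i < n)%nat -> 0 < f i) ->
  forall i j, (i <= j)%nat -> (j <= n)%nat -> psum f i <= psum f j.
Proof.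
  intros Hp i j Hij Hjn. induction j as [|j IH].
  - assert (i = 0%nat) by lia. subst. lra.
  - destruct (Nat.eq_dec i (S j)) as [->|Hne]. lra.
    simpl. assert (0 < f j) by (apply Hp; lia). assert (psum f i <= psum f j) by (apply IH; lia). lra.
Qed.

Lemma psum_lt (f : nat -> R) (n : nat) :
  (forall i, (i < n)%nat -> 0 < f i) ->
  forall i j, (i < j)%nat -> (j <= n)%nat -> psum f i < psum f j.
Proof.
  intros Hp i j Hij Hjn. destruct j as [|j]. lia. simpl.
  assert (0 < f j) by (apply Hp; lia). assert (psum f i <= psum f j) by (apply (psum_le f n Hp); lia). lra.
Qed.

Lemma psum_zero (f : nat -> R) n : (forall i, (i < n)%nat -> f i = 0) -> psum f n = 0.
Proof. induction n; simpl; intros H. lra. rewrite IHn by (intros; apply H; lia). rewrite H by lia. lra. Qed.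

Lemma psum_single (f : nat -> R) n j : (j < n)%nat ->
  (forall i, (i < n)%nat -> i <> j -> f i = 0) -> psum f n = f j.
Proof.
  induction n; intros Hj H. lia. simpl.
  destruct (Nat.eq_dec j n) as [->|Hne].
  - rewrite psum_zero. lra. intros i Hi. apply H; lia.
  - rewrite IHn by (try lia; intros; apply H; lia). rewrite (H n) by lia. lra.
Qed.

Lemma psum_ext (f g : nat -> R) n : (forall i, (i < n)%nat -> f i = g i) -> psum f n = psum g n.
Proof. induction n; simpl; intros H. lra. rewrite IHn by (intros; apply H; lia). rewrite H by lia. lra. Qed.

Lemma psum_shift (f : nat -> R) n : psum f (S n) = f 0%nat + psum (fun k => f (S k)) n.
Proof. induction n. simpl. lra. simpl in *. rewrite IHn. lra. Qed.

Lemma ind_in p q x : p <= x < q -> ind p q x = 1.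
Proof. intros [H1 H2]. unfold ind. destruct (Rle_dec p x); [|lra]. destruct (Rlt_dec x q); lra. Qed.
Lemma ind_out p q x : not (p <= x < q) -> ind p q x = 0.
Proof. intros H. unfold ind. destruct (Rle_dec p x); auto. destruct (Rlt_dec x q); auto. exfalso; apply H; lra. Qed.

Lemma find_piece (f : nat -> R) n x :
  (forall i, (i < n)%nat -> 0 < f i) -> 0 <= x < psum f n ->
  exists j, (j < n)%nat /\ psum f j <= x < psum f (S j).
Proof.
  induction n; intros Hp Hx. simpl in Hx. lra.
  destruct (Rlt_dec x (psum f n)) as [Hl|Hl].
  - destruct IHn as [j [Hj Hj2]]. intros; apply Hp; lia. lra. exists j. split; [lia|auto].
  - exists n. split. lia. lra.
Qed.

Lemma frac_IZR_plus (n : Z) (f : R) : 0 <= f < 1 -> frac_part (IZR n + f) = f.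
Proof.
  intros Hf. unfold frac_part, Int_part.
  assert (Hu : (n + 1)%Z = up (IZR n + f)).
  { apply tech_up; rewrite plus_IZR; lra. }
  rewrite <- Hu. rewrite minus_IZR, plus_IZR. lra.
Qed.

Lemma frac_id (f : R) : 0 <= f < 1 -> frac_part f = f.
Proof. intros H. replace f with (IZR 0 + f) at 1 by (simpl; lra). apply frac_IZR_plus; auto. Qed.

Lemma frac_bounds (x : R) : 0 <= frac_part x < 1.
Proof. unfold frac_part. pose proof (base_Int_part x). assert (IZR (Int_part x) > x - 1).
  { destruct H. lra. } destruct H. split. lra.
  unfold Int_part in *. pose proof (archimed x) as [Ha Hb]. rewrite minus_IZR. simpl. lra.
Qed.

Lemma frac_decomp (x : R) : exists n : Z, x = IZR n + frac_part x.
Proof. exists (Int_part x). unfold frac_part. lra. Qed.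
Lemma cdist_nonneg x y : 0 <= cdist x y.
Proof. unfold cdist. pose proof (frac_bounds (x - y)). apply Rmin_glb; lra. Qed.

Lemma cdist_le x y (n : Z) : cdist x y <= Rabs (x - y - IZR n).
Proof.
  unfold cdist. destruct (frac_decomp (x - y)) as [k Hk].
  pose proof (frac_bounds (x - y)) as Hf.
  set (f := frac_part (x - y)) in *.
  replace (x - y - IZR n) with (IZR (k - n) + f) by (rewrite minus_IZR; lra).
  destruct (Z_lt_le_dec (k - n) 0) as [Hz|Hz].
  - assert (IZR (k - n) <= -1) by (apply IZR_le; lia).
    rewrite Rabs_left by lra. apply Rle_trans with (1 - f). apply Rmin_r. lra.
  - assert (0 <= IZR (k - n)) by (apply IZR_le; lia).
    rewrite Rabs_pos_eq by lra. apply Rle_trans with f. apply Rmin_l. lra.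
Qed.

Lemma cdist_small x y d : cdist x y < d -> exists n : Z, Rabs (x - y - IZR n) < d.
Proof.
  unfold cdist. destruct (frac_decomp (x - y)) as [k Hk].
  pose proof (frac_bounds (x - y)) as Hf.
  set (f := frac_part (x - y)) in *. intros H.
  destruct (Rle_dec f (1 - f)).
  - rewrite Rmin_left in H by lra. exists k. rewrite Rabs_pos_eq; lra.
  - rewrite Rmin_right in H by lra. exists (k + 1)%Z. rewrite plus_IZR.
    rewrite Rabs_left; lra.
Qed.

Lemma cdist_refl x : cdist x x = 0.
Proof. apply Rle_antisym. pose proof (cdist_le x x 0). simpl in H. rewrite Rminus_diag, Rminus_0_r, Rabs_R0 in H. auto. apply cdist_nonneg. Qed.

Lemma cdist_zero_int x y : cdist x y = 0 -> exists n : Z, x - y = IZR n.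
Proof.
  unfold cdist. destruct (frac_decomp (x - y)) as [k Hk].
  pose proof (frac_bounds (x - y)) as Hf.
  set (f := frac_part (x - y)) in *. intros H.
  destruct (Rle_dec f (1 - f)).
  - rewrite Rmin_left in H by lra. exists k. lra.
  - rewrite Rmin_right in H by lra. lra.
Qed.

Lemma cdist_half x y : (x - y = 1/2 \/ x - y = - (1/2)) -> cdist x y <> 0.
Proof.
  intros Hxy H. destruct (cdist_zero_int x y H) as [n Hn].
  destruct (Z_lt_le_dec n 0) as [Hz|Hz].
  - assert (IZR n <= -1) by (apply IZR_le; lia). lra.
  - destruct (Z.eq_dec n 0) as [->|Hne]. simpl in Hn. lra.
    assert (1 <= IZR n) by (apply IZR_le; lia). lra.
Qed.

Lemma cdist_small01 x y d : 0 <= x < 1 -> 0 <= y < 1 -> d <= 1/2 -> cdist x y < d ->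
  Rabs (x - y) < d \/ Rabs (x - y - 1) < d \/ Rabs (x - y + 1) < d.
Proof.
  intros Hx Hy Hd H. destruct (cdist_small x y d H) as [n Hn].
  destruct (Z_lt_le_dec n 0) as [Hz|Hz].
  - destruct (Z.eq_dec n (-1)) as [->|Hne].
    + right; right. replace (x - y + 1) with (x - y - IZR (-1)) by (simpl; lra). auto.
    + assert (IZR n <= -2) by (apply IZR_le; lia). exfalso.
      revert Hn. unfold Rabs. destruct (Rcase_abs _); lra.
  - destruct (Z.eq_dec n 0) as [->|Hne].
    + left. simpl in Hn. rewrite Rminus_0_r in Hn. auto.
    + destruct (Z.eq_dec n 1) as [->|Hne1].
      * right; left. auto.
      * assert (2 <= IZR n) by (apply IZR_le; lia). exfalso.
        revert Hn. unfold Rabs. destruct (Rcase_abs _); lra.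
Qed.

Section Dyn.
Variables (m : nat) (a b : nat -> R).
Hypothesis HL : length_vector m a b.
Local Notation T := (Tl m a b).
Local Notation PA := (psum a m).
Local Notation PB := (psum b m).

Lemma Hm : (1 <= m)%nat. Proof. apply HL. Qed.
Lemma Ha : forall i, (i < m)%nat -> 0 < a i. Proof. apply HL. Qed.
Lemma Hb : forall i, (i < m)%nat -> 0 < b i. Proof. apply HL. Qed.
Lemma Hsum : PA + PB = 1. Proof. apply HL. Qed.

Lemma pa_le i j : (i <= j)%nat -> (j <= m)%nat -> psum a i <= psum a j.
Proof. apply psum_le, Ha. Qed.
Lemma pb_le i j : (i <= j)%nat -> (j <= m)%nat -> psum b i <= psum b j.
Proof. apply psum_le, Hb. Qed.
Lemma pa_lt i j : (i < j)%nat -> (j <= m)%nat -> psum a i < psum a j.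
Proof. apply psum_lt, Ha. Qed.
Lemma pb_lt i j : (i < j)%nat -> (j <= m)%nat -> psum b i < psum b j.
Proof. apply psum_lt, Hb. Qed.

Definition inA j x := (j < m)%nat /\ psum a j <= x < psum a (S j).
Definition inB j x := (j < m)%nat /\ PA + psum b j <= x < PA + psum b (S j).

Lemma inA_range j x : inA j x -> 0 <= x < PA.
Proof. intros [Hj Hx]. assert (psum a 0 <= psum a j) by (apply pa_le; lia).
  assert (psum a (S j) <= PA) by (apply pa_le; lia). simpl psum at 1 in H. lra. Qed.

Lemma inB_range j x : inB j x -> PA <= x < 1.
Proof. intros [Hj Hx]. assert (psum a 0 <= psum a j) by (apply pa_le; lia). pose proof Hsum.
  assert (psum b 0 <= psum b j) by (apply pb_le; lia).
  assert (psum b (S j) <= PB) by (apply pb_le; lia). simpl in *. lra. Qed.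

Lemma inA_uniq i j x : inA i x -> inA j x -> i = j.
Proof. intros [Hi Hx] [Hj Hy]. destruct (Nat.lt_trichotomy i j) as [H|[H|H]]; auto.
  - assert (psum a (S i) <= psum a j) by (apply pa_le; lia). lra.
  - assert (psum a (S j) <= psum a i) by (apply pa_le; lia). lra. Qed.

Lemma inB_uniq i j x : inB i x -> inB j x -> i = j.
Proof. intros [Hi Hx] [Hj Hy]. destruct (Nat.lt_trichotomy i j) as [H|[H|H]]; auto.
  - assert (psum b (S i) <= psum b j) by (apply pb_le; lia). lra.
  - assert (psum b (S j) <= psum b i) by (apply pb_le; lia). lra. Qed.

Lemma inA_notB i j x : inA i x -> not (inB j x).
Proof. intros HA HB. apply inA_range in HA. apply inB_range in HB. lra. Qed.

Lemma piece x : 0 <= x < 1 -> (exists j, inA j x) \/ (exists j, inB j x).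
Proof.
  intros Hx. pose proof Hsum. destruct (Rlt_dec x PA).
  - left. destruct (find_piece a m x Ha) as [j [Hj Hj2]]. simpl; lra. exists j. split; auto.
  - right. destruct (find_piece b m (x - PA) Hb) as [j [Hj Hj2]]. simpl; lra.
    exists j. split; auto. lra.
Qed.

Lemma T_A j x : inA j x -> T x = x + psum b (S j).
Proof.
  intros HA. unfold Tl.
  rewrite (psum_single _ m j). 2: apply HA.
  2: { intros i Hi Hij. rewrite ind_out. lra. intros Hin. apply Hij. apply (inA_uniq i j x); auto.
       split; auto. }
  rewrite ind_in by apply HA.
  rewrite (psum_zero (fun i => ind (Bint_lo m a b i) (Bint_hi m a b i) x * (PA - psum a i)) m). lra.
  intros i Hi. rewrite ind_out. lra. intros Hin. apply (inA_notB j i x HA). split; auto.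
Qed.

Lemma T_B j x : inB j x -> T x = x - (PA - psum a j).
Proof.
  intros HB. unfold Tl.
  rewrite (psum_single (fun i => ind (Bint_lo m a b i) (Bint_hi m a b i) x * (PA - psum a i)) m j).
  2: apply HB.
  2: { intros i Hi Hij. rewrite ind_out. lra. intros Hin. apply Hij. apply (inB_uniq i j x); auto.
       split; auto. }
  rewrite ind_in by apply HB.
  rewrite (psum_zero (fun i => ind (Aint_lo a i) (Aint_hi a i) x * psum b (S i)) m). lra.
  intros i Hi. rewrite ind_out. lra. intros Hin. apply (inA_notB i j x). split; auto. auto.
Qed.

Lemma chiB_B j x : inB j x -> chiB m a b x = 1.
Proof.
  intros HB. unfold chiB. rewrite (psum_single _ m j). apply ind_in, HB. apply HB.
  intros i Hi Hij. apply ind_out. intros Hin. apply Hij. apply (inB_uniq i j x); auto. split; auto.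
Qed.

Lemma chiB_notB x : (forall j, not (inB j x)) -> chiB m a b x = 0.
Proof. intros H. unfold chiB. apply psum_zero. intros i Hi. apply ind_out. intros Hin. apply (H i). split; auto. Qed.

Lemma chiB_A j x : inA j x -> chiB m a b x = 0.
Proof. intros HA. apply chiB_notB. intros i. apply (inA_notB j i x HA). Qed.

Lemma chiB01 x : 0 <= chiB m a b x <= 1.
Proof. destruct (classic (exists j, inB j x)) as [[j Hj]|Hn].
  - rewrite (chiB_B j x Hj). lra.
  - rewrite chiB_notB. lra. intros j Hj. apply Hn. exists j; auto. Qed.

Lemma TA_range j x : inA j x -> psum a j + psum b (S j) <= T x < psum a (S j) + psum b (S j).
Proof. intros HA. rewrite (T_A j x HA). destruct HA. lra. Qed.

Lemma TB_range j x : inB j x -> psum a j + psum b j <= T x < psum a j + psum b (S j).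
Proof. intros HB. rewrite (T_B j x HB). destruct HB. lra. Qed.

Lemma T01 x : 0 <= x < 1 -> 0 <= T x < 1.
Proof.
  intros Hx. pose proof Hsum. destruct (piece x Hx) as [[j Hj]|[j Hj]].
  - pose proof (TA_range j x Hj). destruct Hj as [Hj _].
    assert (psum a 0 <= psum a j) by (apply pa_le; lia).
    assert (psum b 0 <= psum b (S j)) by (apply pb_le; lia).
    assert (psum a (S j) <= PA) by (apply pa_le; lia).
    assert (psum b (S j) <= PB) by (apply pb_le; lia). simpl in *. lra.
  - pose proof (TB_range j x Hj). destruct Hj as [Hj _].
    assert (psum a 0 <= psum a j) by (apply pa_le; lia).
    assert (psum b 0 <= psum b j) by (apply pb_le; lia).
    assert (psum a j <= PA) by (apply pa_le; lia).
    assert (psum b (S j) <= PB) by (apply pb_le; lia). simpl in *. lra.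
Qed.

Lemma iter01 n x : 0 <= x < 1 -> 0 <= Nat.iter n T x < 1.
Proof. induction n; intros Hx; simpl; auto. apply T01; auto. Qed.

Lemma T_mono_A i j x y : inA i x -> inA j y -> x <= y -> y - x <= T y - T x.
Proof.
  intros Hx Hy Hxy. rewrite (T_A i x Hx), (T_A j y Hy).
  assert (i <= j)%nat.
  { destruct (le_lt_dec i j); auto. destruct Hx as [? Hx], Hy as [? Hy].
    assert (psum a (S j) <= psum a i) by (apply pa_le; lia). lra. }
  assert (psum b (S i) <= psum b (S j)) by (apply pb_le; [lia| destruct Hy; lia]). lra.
Qed.

Lemma T_mono_B i j x y : inB i x -> inB j y -> x <= y -> y - x <= T y - T x.
Proof.
  intros Hx Hy Hxy. rewrite (T_B i x Hx), (T_B j y Hy).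
  assert (i <= j)%nat.
  { destruct (le_lt_dec i j); auto. destruct Hx as [? Hx], Hy as [? Hy].
    assert (psum b (S j) <= psum b i) by (apply pb_le; lia). lra. }
  assert (psum a i <= psum a j) by (apply pa_le; [lia| destruct Hy; lia]). lra.
Qed.

Lemma T_inj x y : 0 <= x < 1 -> 0 <= y < 1 -> T x = T y -> x = y.
Proof.
  intros Hx Hy Heq.
  assert (Hgen : forall x y, 0 <= x < 1 -> 0 <= y < 1 -> T x = T y -> x <= y -> x = y).
  { clear x y Hx Hy Heq. intros x y Hx Hy Heq Hxy.
    destruct (piece x Hx) as [[i Hi]|[i Hi]]; destruct (piece y Hy) as [[j Hj]|[j Hj]].
    - pose proof (T_mono_A i j x y Hi Hj Hxy). lra.
    - exfalso. pose proof (TA_range i x Hi). pose proof (TB_range j y Hj).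
      destruct Hi as [Hi _], Hj as [Hj _].
      destruct (le_lt_dec j i).
      + assert (psum b (S j) <= psum b (S i)) by (apply pb_le; lia).
        assert (psum a j <= psum a i) by (apply pa_le; lia). lra.
      + assert (psum b (S i) <= psum b j) by (apply pb_le; lia).
        assert (psum a (S i) <= psum a j) by (apply pa_le; lia). lra.
    - exfalso. apply inB_range in Hi. apply inA_range in Hj. lra.
    - pose proof (T_mono_B i j x y Hi Hj Hxy). lra. }
  destruct (Rle_dec x y). apply Hgen; auto. symmetry. apply Hgen; auto. lra.
Qed.

Lemma T_A_step j x : inA j x -> x + b 0%nat <= T x.
Proof. intros HA. rewrite (T_A j x HA). assert (psum b 1 <= psum b (S j)) by (apply pb_le; destruct HA; lia).
  assert (psum b 1 = b 0%nat) by (simpl; lra). lra. Qed.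

Lemma T_B_step j x : inB j x -> T x <= x - a (pred m).
Proof. intros HB. rewrite (T_B j x HB). destruct HB as [Hj _].
  assert (psum a j <= psum a (pred m)) by (apply pa_le; lia).
  assert (PA = psum a (pred m) + a (pred m)).
  { replace m with (S (pred m)) at 1 by (pose proof Hm; lia). reflexivity. } lra. Qed.

Lemma exit_A x : 0 <= x < 1 -> exists n j, inB j (Nat.iter n T x).
Proof.
  assert (Hb0 : 0 < b 0%nat) by (apply Hb; pose proof Hm; lia).
  assert (Hgen : forall N x, 0 <= x < 1 -> 1 - x < INR N * b 0%nat -> exists n j, inB j (Nat.iter n T x)).
  { induction N; intros y Hy HN. simpl in HN. lra.
    destruct (piece y Hy) as [[j Hj]|[j Hj]].
    - destruct (IHN (T y)) as [n [k Hk]]. apply T01; auto.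
      pose proof (T_A_step j y Hj). rewrite S_INR in HN. lra.
      exists (S n), k. rewrite Nat.iter_succ_r. auto.
    - exists 0%nat, j. auto. }
  intros Hx. destruct (archimed (2 / b 0%nat)) as [H1 _].
  apply (Hgen (Z.to_nat (up (2 / b 0%nat)))); auto.
  rewrite INR_IZR_INZ, Z2Nat.id.
  2: { apply le_IZR. assert (0 < 2 / b 0%nat) by (apply Rdiv_lt_0_compat; lra). simpl. lra. }
  apply Rlt_le_trans with 2. lra.
  replace 2 with (2 / b 0%nat * b 0%nat) at 1 by (field; lra).
  apply Rmult_le_compat_r; lra.
Qed.

Lemma exit_B x : 0 <= x < 1 -> exists n j, inA j (Nat.iter n T x).
Proof.
  assert (Ha0 : 0 < a (pred m)) by (apply Ha; pose proof Hm; lia).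
  assert (Hgen : forall N x, 0 <= x < 1 -> x < INR N * a (pred m) -> exists n j, inA j (Nat.iter n T x)).
  { induction N; intros y Hy HN. simpl in HN. lra.
    destruct (piece y Hy) as [[j Hj]|[j Hj]].
    - exists 0%nat, j. auto.
    - destruct (IHN (T y)) as [n [k Hk]]. apply T01; auto.
      pose proof (T_B_step j y Hj). rewrite S_INR in HN. lra.
      exists (S n), k. rewrite Nat.iter_succ_r. auto. }
  intros Hx. destruct (archimed (2 / a (pred m))) as [H1 _].
  apply (Hgen (Z.to_nat (up (2 / a (pred m))))); auto.
  rewrite INR_IZR_INZ, Z2Nat.id.
  2: { apply le_IZR. assert (0 < 2 / a (pred m)) by (apply Rdiv_lt_0_compat; lra). simpl. lra. }
  apply Rlt_le_trans with 2. lra.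
  replace 2 with (2 / a (pred m) * a (pred m)) at 1 by (field; lra).
  apply Rmult_le_compat_r; lra.
Qed.

End Dyn.

Section Ser.
Variables (m : nat) (a b : nat -> R).
Hypothesis HL : length_vector m a b.
Local Notation T := (Tl m a b).
Local Notation H := (Hl m a b).
Local Notation chi := (chiB m a b).

Definition term x n := chi (Nat.iter n T x) / 2 ^ (S n).
Definition P N x := psum (term x) N.

Lemma pow2_pos n : 0 < 2 ^ n.
Proof. apply pow_lt; lra. Qed.

Lemma term_bounds x n : 0 <= term x n <= / 2 ^ (S n).
Proof. unfold term. pose proof (chiB01 m a b HL (Nat.iter n T x)). pose proof (pow2_pos (S n)).
  split. apply Rdiv_le_0_compat; lra. unfold Rdiv. rewrite <- (Rmult_1_l (/ 2 ^ S n)) at 2.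
  apply Rmult_le_compat_r. left; apply Rinv_0_lt_compat; lra. lra. Qed.

Lemma term_ex x : ex_series (term x).
Proof.
  apply (@ex_series_le R_AbsRing R_CompleteNormedModule _ (fun n => (1/2) ^ n)).
  - intros n. change (norm (term x n)) with (Rabs (term x n)). pose proof (term_bounds x n).
    rewrite Rabs_pos_eq by lra. apply Rle_trans with (/ 2 ^ S n). lra.
    assert (Hh : forall k, (1/2)^k = / 2 ^ k).
    { induction k. simpl. lra. simpl. rewrite IHk. pose proof (pow2_pos k). field. lra. }
    rewrite Hh. apply Rinv_le_contravar. apply pow2_pos. simpl. pose proof (pow2_pos n). lra.
  - apply ex_series_geom. rewrite Rabs_pos_eq; lra.
Qed.

Lemma sum_n_psum (f : nat -> R) N : sum_n f N = psum f (S N).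
Proof. induction N. rewrite sum_O. simpl. lra. rewrite sum_Sn, IHN. simpl. unfold plus. simpl. lra. Qed.

Lemma P_lim x : is_lim_seq (fun N => P N x) (H x).
Proof.
  apply is_lim_seq_incr_1. unfold P.
  apply is_lim_seq_ext with (sum_n (term x)). intros N. apply sum_n_psum.
  pose proof (Series_correct _ (term_ex x)) as Hs. exact Hs.
Qed.

Lemma term_S x n : term x (S n) = term (T x) n / 2.
Proof. unfold term. rewrite Nat.iter_succ_r. simpl. pose proof (pow2_pos n). field. lra. Qed.

Lemma P_rec N x : P (S N) x = chi x / 2 + P N (T x) / 2.
Proof.
  unfold P. rewrite psum_shift. unfold term at 1. simpl Nat.iter.
  rewrite (psum_ext _ (fun k => term (T x) k / 2)) by (intros; apply term_S).
  assert (Hd : forall (f : nat -> R) n, psum (fun k => f k / 2) n = psum f n / 2).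
  { intros f n. induction n; simpl. lra. rewrite IHn. lra. }
  rewrite Hd. simpl. lra.
Qed.

Lemma H_rec x : H x = chi x / 2 + H (T x) / 2.
Proof.
  assert (L1 : is_lim_seq (fun N => P (S N) x) (H x)).
  { apply (is_lim_seq_incr_1 (fun N => P N x)). apply P_lim. }
  assert (L2 : is_lim_seq (fun N => chi x / 2 + P N (T x) / 2) (chi x / 2 + H (T x) / 2)).
  { apply is_lim_seq_plus'. apply is_lim_seq_const.
    apply is_lim_seq_ext with (fun N => /2 * P N (T x)). intros; lra.
    replace (H (T x) / 2) with (/2 * H (T x)) by lra.
    apply (is_lim_seq_scal_l _ (/2) (H (T x))). apply P_lim. }
  apply is_lim_seq_ext with (v := fun N => chi x / 2 + P N (T x) / 2) in L1.
  2: { intros; apply P_rec. }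
  apply is_lim_seq_unique in L1. apply is_lim_seq_unique in L2. rewrite L1 in L2. injection L2; auto.
Qed.

Lemma P_bounds N x : 0 <= P N x <= 1 - / 2 ^ N.
Proof.
  revert x. induction N; intros x. unfold P; simpl. lra.
  rewrite P_rec. pose proof (chiB01 m a b HL x). pose proof (IHN (T x)).
  simpl. pose proof (pow2_pos N). split. lra.
  assert (Hq : / (2 * 2 ^ N) = / 2 ^ N / 2) by (field; lra). rewrite Hq. lra.
Qed.

Lemma lim_le (u : nat -> R) (l c : R) : is_lim_seq u l -> (forall n, u n <= c) -> l <= c.
Proof. intros Hu Hc. assert (Hr : Rbar_le l c) by exact (is_lim_seq_le u (fun _ => c) l c Hc Hu (is_lim_seq_const c)). exact Hr. Qed.
Lemma lim_ge (u : nat -> R) (l c : R) : is_lim_seq u l -> (forall n, c <= u n) -> c <= l.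
Proof. intros Hu Hc. assert (Hr : Rbar_le c l) by exact (is_lim_seq_le (fun _ => c) u c l Hc (is_lim_seq_const c) Hu). exact Hr. Qed.

Lemma H_bounds x : 0 <= H x <= 1.
Proof. split. apply (lim_ge (fun N => P N x)). apply P_lim. intros; apply P_bounds.
  apply (lim_le (fun N => P N x)). apply P_lim. intros. pose proof (P_bounds n x). pose proof (pow2_pos n).
  assert (0 < / 2 ^ n) by (apply Rinv_0_lt_compat; lra). lra. Qed.

Lemma P_mono N x y : 0 <= x < 1 -> 0 <= y < 1 -> x <= y -> P N x <= P N y.
Proof.
  revert x y. induction N; intros x y Hx Hy Hxy. unfold P; simpl; lra.
  rewrite !P_rec.
  destruct (piece m a b HL x Hx) as [[i Hi]|[i Hi]]; destruct (piece m a b HL y Hy) as [[j Hj]|[j Hj]].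
  - rewrite (chiB_A m a b HL i x Hi), (chiB_A m a b HL j y Hj).
    pose proof (T_mono_A m a b HL i j x y Hi Hj Hxy).
    assert (P N (T x) <= P N (T y)) by (apply IHN; try apply T01; auto; lra). lra.
  - rewrite (chiB_A m a b HL i x Hi), (chiB_B m a b HL j y Hj).
    pose proof (P_bounds N (T x)). pose proof (P_bounds N (T y)). pose proof (pow2_pos N).
    assert (0 < / 2 ^ N) by (apply Rinv_0_lt_compat; lra). lra.
  - exfalso. apply (inB_range m a b HL) in Hi. apply (inA_range m a b HL) in Hj. lra.
  - rewrite (chiB_B m a b HL i x Hi), (chiB_B m a b HL j y Hj).
    pose proof (T_mono_B m a b HL i j x y Hi Hj Hxy).
    assert (P N (T x) <= P N (T y)) by (apply IHN; try apply T01; auto; lra). lra.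
Qed.

Lemma H_mono x y : 0 <= x < 1 -> 0 <= y < 1 -> x <= y -> H x <= H y.
Proof.
  intros Hx Hy Hxy. assert (Hr : Rbar_le (H x) (H y)).
  apply (is_lim_seq_le (fun N => P N x) (fun N => P N y)). intros; apply P_mono; auto.
  apply P_lim. apply P_lim. simpl in Hr; auto.
Qed.

Lemma H_lt1 x : 0 <= x < 1 -> H x < 1.
Proof.
  intros Hx. destruct (exit_B m a b HL x Hx) as [n [j Hj]]. revert x Hx Hj. induction n; intros x Hx Hj.
  - simpl in Hj. rewrite H_rec, (chiB_A m a b HL j x Hj). pose proof (H_bounds (T x)). lra.
  - rewrite Nat.iter_succ_r in Hj. pose proof (IHn (T x) (T01 m a b HL x Hx) Hj).
    rewrite H_rec. pose proof (chiB01 m a b HL x). lra.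
Qed.

Lemma H_pos x : 0 <= x < 1 -> 0 < H x.
Proof.
  intros Hx. destruct (exit_A m a b HL x Hx) as [n [j Hj]]. revert x Hx Hj. induction n; intros x Hx Hj.
  - simpl in Hj. rewrite H_rec, (chiB_B m a b HL j x Hj). pose proof (H_bounds (T x)). lra.
  - rewrite Nat.iter_succ_r in Hj. pose proof (IHn (T x) (T01 m a b HL x Hx) Hj).
    rewrite H_rec. pose proof (chiB01 m a b HL x). lra.
Qed.

Lemma H_A j x : inA m a j x -> H x = H (T x) / 2.
Proof. intros HA. rewrite H_rec, (chiB_A m a b HL j x HA). lra. Qed.
Lemma H_B j x : inB m a b j x -> H x = 1/2 + H (T x) / 2.
Proof. intros HB. rewrite H_rec, (chiB_B m a b HL j x HB). lra. Qed.

End Ser.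

Lemma drift (x : nat -> R) d : 0 < d -> (forall k, x k + d <= x (S k)) -> (forall k, 0 <= x k <= 1) -> False.
Proof.
  intros Hd Hs Hb.
  assert (Hk : forall k, x 0%nat + INR k * d <= x k).
  { induction k. simpl. lra. rewrite S_INR. specialize (Hs k). lra. }
  destruct (archimed (2 / d)) as [H1 _].
  set (K := Z.to_nat (up (2 / d))).
  assert (HK : 2 / d <= INR K).
  { unfold K. rewrite INR_IZR_INZ, Z2Nat.id. lra. apply le_IZR.
    assert (0 < 2 / d) by (apply Rdiv_lt_0_compat; lra). simpl. lra. }
  specialize (Hk K). pose proof (Hb 0%nat). pose proof (Hb K).
  assert (2 <= INR K * d). { replace 2 with (2 / d * d) by (field; lra). apply Rmult_le_compat_r; lra. }
  lra.
Qed.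

Lemma pigeon : forall K (g : nat -> nat), (forall n, (n <= S K)%nat -> (g n <= K)%nat) ->
  exists i j, (i < j)%nat /\ (j <= S K)%nat /\ g i = g j.
Proof.
  induction K; intros g Hg.
  - exists 0%nat, 1%nat. pose proof (Hg 0%nat). pose proof (Hg 1%nat). split. lia. split. lia. lia.
  - destruct (classic (exists i, (i <= S K)%nat /\ g i = g (S (S K)))) as [[i [Hi Hgi]]|Hn].
    + exists i, (S (S K)). split. lia. split. lia. auto.
    + set (v := g (S (S K))).
      set (g' := fun n => if Nat.ltb v (g n) then pred (g n) else g n).
      destruct (IHK g') as [i [j [Hij [Hj Heq]]]].
      { intros n Hn'. unfold g'. assert (g n <> v). { intros E. apply Hn. exists n. split. lia. auto. }
        pose proof (Hg n ltac:(lia)) as G1. pose proof (Hg (S (S K)) ltac:(lia)) as G2. fold v in G2.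
        destruct (Nat.ltb_spec v (g n)); lia. }
      exists i, j. split. lia. split. lia.
      assert (g i <> v). { intros E. apply Hn. exists i. split. lia. auto. }
      assert (g j <> v). { intros E. apply Hn. exists j. split. lia. auto. }
      unfold g' in Heq. destruct (Nat.ltb_spec v (g i)); destruct (Nat.ltb_spec v (g j)); lia.
Qed.

Section Strict.
Variables (m : nat) (a b : nat -> R).
Hypothesis HL : length_vector m a b.
Local Notation T := (Tl m a b).
Local Notation H := (Hl m a b).
Local Notation chi := (chiB m a b).
Local Notation it n x := (Nat.iter n (Tl m a b) x).

Lemma chi_H x : 0 <= x < 1 -> (chi x = 0 /\ H x < 1/2) \/ (chi x = 1 /\ 1/2 <= H x).
Proof.
  intros Hx. destruct (piece m a b HL x Hx) as [[j Hj]|[j Hj]].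
  - left. rewrite (chiB_A m a b HL j x Hj). split; auto. rewrite (H_A m a b HL j x Hj).
    pose proof (H_lt1 m a b HL (T x) (T01 m a b HL x Hx)). lra.
  - right. rewrite (chiB_B m a b HL j x Hj). split; auto. rewrite (H_B m a b HL j x Hj).
    pose proof (H_bounds m a b HL (T x)). lra.
Qed.

Lemma chi_of_H x y : 0 <= x < 1 -> 0 <= y < 1 -> H x = H y -> chi x = chi y.
Proof. intros Hx Hy E. destruct (chi_H x Hx) as [[A1 A2]|[A1 A2]]; destruct (chi_H y Hy) as [[B1 B2]|[B1 B2]]; lra. Qed.

Lemma H_step_eq x y : 0 <= x < 1 -> 0 <= y < 1 -> H x = H y -> H (T x) = H (T y).
Proof. intros Hx Hy E. pose proof (chi_of_H x y Hx Hy E). rewrite (H_rec m a b HL x), (H_rec m a b HL y) in E. lra. Qed.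

Lemma H_iter_eq n x y : 0 <= x < 1 -> 0 <= y < 1 -> H x = H y -> H (it n x) = H (it n y).
Proof. induction n; intros Hx Hy E; simpl; auto. apply H_step_eq; try apply iter01; auto. Qed.

Lemma order_step x y : 0 <= x < 1 -> 0 <= y < 1 -> H x = H y -> x <= y -> y - x <= T y - T x.
Proof.
  intros Hx Hy E Hxy.
  destruct (piece m a b HL x Hx) as [[i Hi]|[i Hi]]; destruct (piece m a b HL y Hy) as [[j Hj]|[j Hj]].
  - apply (T_mono_A m a b HL i j); auto.
  - exfalso. pose proof (chi_of_H x y Hx Hy E) as C. rewrite (chiB_A m a b HL i x Hi), (chiB_B m a b HL j y Hj) in C. lra.
  - exfalso. pose proof (chi_of_H x y Hx Hy E) as C. rewrite (chiB_B m a b HL i x Hi), (chiB_A m a b HL j y Hj) in C. lra.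
  - apply (T_mono_B m a b HL i j); auto.
Qed.

Lemma order_iter n x y : 0 <= x < 1 -> 0 <= y < 1 -> H x = H y -> x <= y -> y - x <= it n y - it n x.
Proof.
  revert x y. induction n; intros x y Hx Hy E Hxy. simpl. lra.
  rewrite !Nat.iter_succ_r. pose proof (order_step x y Hx Hy E Hxy).
  pose proof (IHn (T x) (T y) (T01 m a b HL x Hx) (T01 m a b HL y Hy) (H_step_eq x y Hx Hy E) ltac:(lra)). lra.
Qed.

Lemma no_drift p z : 0 <= z < 1 -> H (it p z) = H z -> it p z = z.
Proof.
  intros Hz E. set (x := fun k => it (k * p) z).
  assert (Hx01 : forall k, 0 <= x k < 1) by (intros; apply iter01; auto).
  assert (HxH : forall k, H (x k) = H z).
  { induction k. reflexivity. unfold x. replace (S k * p)%nat with (p + k * p)%nat by lia.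
    rewrite Nat.iter_add. fold (x k). rewrite (H_iter_eq p (x k) z (Hx01 k) Hz IHk). auto. }
  assert (Hsx : forall k, x (S k) = it p (x k)).
  { intros k. unfold x. replace (S k * p)%nat with (p + k * p)%nat by lia. apply Nat.iter_add. }
  assert (Hx1 : x 1%nat = it p z). { unfold x. f_equal. lia. }
  destruct (Rtotal_order (it p z) z) as [Hl|[He|Hg]]; auto; exfalso.
  -
    apply (drift (fun k => 1 - x k) (z - it p z)). lra.
    + intros k. induction k.
      * simpl. rewrite Hx1. unfold x; simpl. lra.
      * cbv beta in *. assert (Hle : x (S k) <= x k) by lra.
        pose proof (order_iter p (x (S k)) (x k) (Hx01 (S k)) (Hx01 k) ltac:(rewrite !HxH; auto) Hle) as C.
        rewrite <- (Hsx k), <- (Hsx (S k)) in C. lra.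
    + intros k. pose proof (Hx01 k). lra.
  - apply (drift x (it p z - z)). lra.
    + intros k. induction k.
      * rewrite Hx1. unfold x; simpl. lra.
      * assert (Hle : x k <= x (S k)) by lra.
        pose proof (order_iter p (x k) (x (S k)) (Hx01 k) (Hx01 (S k)) ltac:(rewrite !HxH; auto) Hle) as C.
        rewrite <- (Hsx k), <- (Hsx (S k)) in C. lra.
    + intros k. pose proof (Hx01 k). lra.
Qed.
End Strict.

Section Sep.
Variables (m : nat) (a b : nat -> R).
Hypothesis HL : length_vector m a b.
Local Notation T := (Tl m a b).
Local Notation H := (Hl m a b).
Local Notation chi := (chiB m a b).
Local Notation it n x := (Nat.iter n (Tl m a b) x).

Lemma iter_cancel i u v : 0 <= u < 1 -> 0 <= v < 1 -> it i u = it i v -> u = v.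
Proof.
  induction i; intros Hu Hv E. simpl in E; auto.
  rewrite !Nat.iter_succ in E. apply IHi; auto.
  apply (T_inj m a b HL); try apply iter01; auto.
Qed.

Lemma Int_part_nonneg r : 0 <= r -> (0 <= Int_part r)%Z.
Proof. intros Hr. pose proof (base_Int_part r) as [_ H2].
  assert (Hq : IZR (Int_part r) > -1) by lra. apply lt_IZR in Hq. lia. Qed.

Lemma sep c c' p0 p0' : 0 <= c < 1 -> 0 <= c' < 1 -> 0 <= p0 < 1 -> 0 <= p0' < 1 ->
  c < c' -> T p0 = c -> T p0' = c' -> chi p0 <> chi p0' -> H c < H c'.
Proof.
  intros Hc Hc' Hp Hp' Hlt E0 E0' Hchi.
  assert (Hle : H c <= H c') by (apply (H_mono m a b HL); auto; lra).
  destruct (Rle_lt_or_eq_dec _ _ Hle) as [|E]; auto. exfalso.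
  set (L := c' - c). assert (HLp : 0 < L) by (unfold L; lra).
  assert (HE : forall n, H (it n c) = H (it n c')) by (intros; apply H_iter_eq; auto).
  assert (HD : forall n, L <= it n c' - it n c) by (intros; apply order_iter; auto; lra).
  assert (I01 : forall n x, 0 <= x < 1 -> 0 <= it n x < 1) by (intros; apply iter01; auto).
  set (g := fun n => Z.to_nat (Int_part (it n c / L))).
  set (K := Z.to_nat (up (1 / L))).
  assert (Hnn : forall n, (0 <= Int_part (it n c / L))%Z).
  { intros n. apply Int_part_nonneg. pose proof (I01 n c Hc). apply Rdiv_le_0_compat; lra. }
  destruct (pigeon K g) as [i [j [Hij [Hj Hg]]]].
  { intros n _. unfold g, K. pose proof (Hnn n).
    assert (Int_part (it n c / L) < up (1 / L))%Z.
    { apply lt_IZR. pose proof (base_Int_part (it n c / L)) as [B1 _]. pose proof (archimed (1 / L)) as [A1 _].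
      pose proof (I01 n c Hc). assert (it n c / L < 1 / L).
      { unfold Rdiv. apply Rmult_lt_compat_r. apply Rinv_0_lt_compat; lra. lra. }
      lra. }
    lia. }
  unfold g in Hg. assert (Hij' : Int_part (it i c / L) = Int_part (it j c / L)).
  { pose proof (Hnn i). pose proof (Hnn j). lia. }
  assert (Hclose : Rabs (it i c - it j c) < L).
  { pose proof (base_Int_part (it i c / L)) as [B1 B2]. pose proof (base_Int_part (it j c / L)) as [C1 C2].
    rewrite Hij' in B1, B2.
    assert (Hab : Rabs (it i c / L - it j c / L) < 1) by (unfold Rabs; destruct Rcase_abs; lra).
    replace (it i c - it j c) with (L * (it i c / L - it j c / L)) by (field; lra).
    rewrite Rabs_mult, Rabs_pos_eq by lra. apply Rlt_le_trans with (L * 1).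
    apply Rmult_lt_compat_l; lra. lra. }
  assert (HHij : H (it i c) = H (it j c)).
  { pose proof (HD i) as D1. pose proof (HD j) as D2.
    pose proof (I01 i c Hc) as D3. pose proof (I01 j c Hc) as D4. pose proof (I01 i c' Hc') as D5. pose proof (I01 j c' Hc') as D6.
    destruct (Rle_dec (it i c) (it j c)).
    - assert (Q1 : H (it i c) <= H (it j c)) by (apply (H_mono m a b HL); auto).
      assert (Q2 : H (it j c) <= H (it i c')) by (apply (H_mono m a b HL); auto; unfold Rabs in Hclose; destruct Rcase_abs in Hclose; lra).
      rewrite <- HE in Q2. lra.
    - assert (Q1 : H (it j c) <= H (it i c)) by (apply (H_mono m a b HL); auto; lra).
      assert (Q2 : H (it i c) <= H (it j c')) by (apply (H_mono m a b HL); auto; unfold Rabs in Hclose; destruct Rcase_abs in Hclose; lra).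
      rewrite <- HE in Q2. lra. }
  set (p := (j - i)%nat).
  assert (Hjp : forall x, it j x = it p (it i x)).
  { intros x. rewrite <- Nat.iter_add. f_equal. unfold p. lia. }
  assert (Fc : it p (it i c) = it i c).
  { apply no_drift; auto. rewrite <- Hjp. auto. }
  assert (Fc' : it p (it i c') = it i c').
  { apply no_drift; auto. rewrite <- Hjp. rewrite <- !HE. auto. }
  assert (Hcom : forall x, it p (it i x) = it i (it p x)).
  { intros x. rewrite <- !Nat.iter_add. f_equal. lia. }
  rewrite Hcom in Fc, Fc'.
  apply iter_cancel in Fc; auto. apply iter_cancel in Fc'; auto.
  destruct p as [|q] eqn:Hpq. unfold p in Hpq. lia.
  rewrite Nat.iter_succ in Fc, Fc'.
  rewrite <- E0 in Fc at 2. rewrite <- E0' in Fc' at 2.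
  apply (T_inj m a b HL) in Fc; auto. apply (T_inj m a b HL) in Fc'; auto.
  apply Hchi. rewrite <- Fc, <- Fc'. apply chi_of_H; auto.
Qed.
End Sep.

Section Flower.
Variables (N : nat) (t : nat -> R).
Hypothesis Hinc : forall k, (S k < N)%nat -> t k < t (S k).
Hypothesis Ht0 : 0 < t 0%nat.
Hypothesis HtN : t (pred N) < 1.
Hypothesis HN : exists q, N = S (2 * q).

Fixpoint cnt (n : nat) (u : R) : nat :=
  match n with O => O | S k => (cnt k u + (if Rle_dec (t k) u then 1 else 0))%nat end.
Definition sig (u : R) : R := if Nat.even (cnt N u) then 1 else 0.
Definition eta (u : R) : R := (sig u + u) / 2.
Definition sgn (k : nat) : R := if Nat.even k then 1 else 0.

Lemma t_lt i j : (i < j)%nat -> (j < N)%nat -> t i < t j.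
Proof.
  intros Hij HjN. induction j. lia.
  destruct (Nat.eq_dec i j) as [->|Hne]. apply Hinc; auto.
  apply Rlt_trans with (t j). apply IHj; lia. apply Hinc; auto.
Qed.
Lemma t_le i j : (i <= j)%nat -> (j < N)%nat -> t i <= t j.
Proof. intros Hij HjN. destruct (Nat.eq_dec i j) as [->|Hne]. lra. left; apply t_lt; lia. Qed.

Lemma N_pos : (1 <= N)%nat. Proof. destruct HN as [q ->]. lia. Qed.

Lemma t_in01 i : (i < N)%nat -> 0 < t i < 1.
Proof. intros Hi. split. apply Rlt_le_trans with (t 0%nat); auto. apply t_le; lia.
  apply Rle_lt_trans with (t (pred N)); auto. apply t_le; lia. Qed.

Lemma cnt_val k u : (k <= N)%nat -> (k = O \/ t (pred k) <= u) -> (k = N \/ u < t k) -> cnt N u = k.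
Proof.
  intros HkN Hlo Hhi.
  assert (Hg : forall n, (n <= N)%nat -> cnt n u = Nat.min n k).
  { induction n; intros Hn. simpl. lia. remember (Nat.min (S n) k) as M. simpl. rewrite IHn by lia.
    destruct (Rle_dec (t n) u) as [Hle|Hgt]; simpl; subst M.
    - destruct (le_lt_dec k n); [|lia]. exfalso.
      destruct Hhi as [->|Hhi]. lia. assert (t k <= t n) by (apply t_le; lia). lra.
    - destruct (le_lt_dec k n); [lia|]. exfalso. destruct Hlo as [->|Hlo]. lia.
      assert (t n <= t (pred k)) by (apply t_le; lia). lra. }
  rewrite Hg by lia. lia.
Qed.

Lemma sig_val k u : (k <= N)%nat -> (k = O \/ t (pred k) <= u) -> (k = N \/ u < t k) -> sig u = sgn k.
Proof. intros. unfold sig, sgn. rewrite (cnt_val k u); auto. Qed.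

Lemma sgn01 k : sgn k = 0 \/ sgn k = 1.
Proof. unfold sgn. destruct (Nat.even k); auto. Qed.

Lemma sig01 u : sig u = 0 \/ sig u = 1.
Proof. unfold sig. destruct (Nat.even (cnt N u)); auto. Qed.

Lemma sgnS k : sgn (S k) = 1 - sgn k.
Proof. unfold sgn. rewrite Nat.even_succ, <- Nat.negb_even. destruct (Nat.even k); simpl; lra. Qed.

Lemma sgnN : sgn N = 0.
Proof. destruct HN as [q ->]. unfold sgn. rewrite Nat.even_succ, <- Nat.negb_even, Nat.even_even. reflexivity. Qed.

Lemma eta_sel x : in01 x -> in01 (eta x) /\ E2 (eta x) = x.
Proof.
  unfold in01, eta, E2. intros Hx. destruct (sig01 x) as [E|E]; rewrite E; split; try lra.
  - replace (2 * ((0 + x) / 2)) with x by field. apply frac_id; auto.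
  - replace (2 * ((1 + x) / 2)) with (IZR 1 + x) by (simpl; field). apply frac_IZR_plus; auto.
Qed.

Lemma cnt_locconst n u : (forall i, (i < n)%nat -> t i <> u) ->
  exists d, 0 < d /\ forall y, Rabs (y - u) < d -> cnt n y = cnt n u.
Proof.
  induction n; intros Hne.
  - exists 1. split. lra. intros; reflexivity.
  - destruct IHn as [d [Hd Hy]]. intros; apply Hne; lia.
    assert (Htn : t n <> u) by (apply Hne; lia).
    exists (Rmin d (Rabs (t n - u))). split.
    + apply Rmin_glb_lt; auto. apply Rabs_pos_lt. lra.
    + intros y Hyu. simpl. rewrite Hy. 2: { apply Rlt_le_trans with (Rmin d (Rabs (t n - u))); auto. apply Rmin_l. }
      assert (Hr : Rabs (y - u) < Rabs (t n - u)) by (apply Rlt_le_trans with (Rmin d (Rabs (t n - u))); auto; apply Rmin_r).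
      destruct (Rle_dec (t n) y); destruct (Rle_dec (t n) u); auto; exfalso;
        revert Hr; unfold Rabs; destruct (Rcase_abs (y - u)); destruct (Rcase_abs (t n - u)); lra.
Qed.

Fixpoint tlist (n : nat) : list R := match n with O => nil | S k => t k :: tlist k end.

Lemma tlist_In n x : In x (tlist n) <-> exists i, (i < n)%nat /\ x = t i.
Proof.
  induction n; simpl. split. tauto. intros [i [Hi _]]. lia.
  split.
  - intros [E|Hin]. exists n. split. lia. auto. apply IHn in Hin. destruct Hin as [i [Hi E]]. exists i. split. lia. auto.
  - intros [i [Hi E]]. destruct (Nat.eq_dec i n) as [->|Hne]. left; auto. right. apply IHn. exists i. split. lia. auto.
Qed.

Lemma tlist_len n : length (tlist n) = n.
Proof. induction n; simpl; auto. Qed.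

Lemma tlist_NoDup n : (n <= N)%nat -> NoDup (tlist n).
Proof.
  induction n; intros Hn; simpl. constructor. constructor. 2: apply IHn; lia.
  intros Hin. apply tlist_In in Hin. destruct Hin as [i [Hi E]].
  assert (t i < t n) by (apply t_lt; lia). lra.
Qed.

Lemma cdist_lt x y e : Rabs (x - y) < e -> cdist x y < e.
Proof. intros H. eapply Rle_lt_trans. apply (cdist_le _ _ 0). simpl. rewrite Rminus_0_r. auto. Qed.

Lemma eta_cont u : in01 u -> (forall i, (i < N)%nat -> t i <> u) -> circ_continuous_at eta u.
Proof.
  intros Hu Hne eps Heps. unfold in01 in Hu.
  destruct (Req_dec u 0) as [Hu0|Hu0].
  - subst u. assert (Hc0 : cnt N 0 = O) by (apply cnt_val; [lia|left; auto|right; auto]).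
    assert (HtN' := t_in01 (pred N) ltac:(pose proof N_pos; lia)).
    set (d := Rmin (Rmin eps (t 0%nat)) (Rmin (1 - t (pred N)) (1/2))).
    assert (Hd1 : d <= eps) by (unfold d; eapply Rle_trans; apply Rmin_l).
    assert (Hd2 : d <= t 0%nat) by (unfold d; eapply Rle_trans; [apply Rmin_l|apply Rmin_r]).
    assert (Hd3 : d <= 1 - t (pred N)) by (unfold d; eapply Rle_trans; [apply Rmin_r|apply Rmin_l]).
    assert (Hd4 : d <= 1/2) by (unfold d; eapply Rle_trans; [apply Rmin_r|apply Rmin_r]).
    assert (Hdp : 0 < d).
    { unfold d. apply Rmin_glb_lt; apply Rmin_glb_lt; lra. }
    exists d. split; auto. intros y Hy Hcd. unfold in01 in Hy.
    assert (Heta0 : eta 0 = 1/2). { unfold eta, sig. rewrite Hc0. simpl. lra. }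
    rewrite Heta0.
    destruct (cdist_small01 y 0 d Hy ltac:(lra) Hd4 Hcd) as [C|[C|C]];
      apply Rabs_def2 in C; destruct C as [C1 C2].
    + assert (E : sig y = sgn 0) by (apply sig_val; [lia|left; auto|right; lra]).
      unfold sgn in E; simpl in E.
      unfold eta. rewrite E. apply cdist_lt, Rabs_def1; lra.
    + assert (E : sig y = sgn N) by (apply sig_val; [lia|right; lra|left; auto]).
      rewrite sgnN in E.
      unfold eta. rewrite E. apply cdist_lt, Rabs_def1; lra.
    + lra.
  - destruct (cnt_locconst N u Hne) as [d1 [Hd1p Hd1]].
    set (d := Rmin (Rmin eps d1) (Rmin (Rmin u (1 - u)) (1/2))).
    assert (Hd1' : d <= eps) by (unfold d; eapply Rle_trans; [apply Rmin_l|apply Rmin_l]).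
    assert (Hd2 : d <= d1) by (unfold d; eapply Rle_trans; [apply Rmin_l|apply Rmin_r]).
    assert (Hd3 : d <= u) by (unfold d; eapply Rle_trans; [apply Rmin_r|]; eapply Rle_trans; [apply Rmin_l|apply Rmin_l]).
    assert (Hd4 : d <= 1 - u) by (unfold d; eapply Rle_trans; [apply Rmin_r|]; eapply Rle_trans; [apply Rmin_l|apply Rmin_r]).
    assert (Hd5 : d <= 1/2) by (unfold d; eapply Rle_trans; [apply Rmin_r|apply Rmin_r]).
    assert (Hdp : 0 < d).
    { unfold d. apply Rmin_glb_lt; apply Rmin_glb_lt; try apply Rmin_glb_lt; lra. }
    exists d. split; auto. intros y Hy Hcd. unfold in01 in Hy.
    destruct (cdist_small01 y u d Hy ltac:(lra) Hd5 Hcd) as [C|[C|C]].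
    + assert (E : cnt N y = cnt N u) by (apply Hd1; lra).
      unfold eta, sig. rewrite E. apply Rabs_def2 in C. apply cdist_lt, Rabs_def1; lra.
    + exfalso. apply Rabs_def2 in C. lra.
    + exfalso. apply Rabs_def2 in C. lra.
Qed.

Lemma eta_jump k : (k < N)%nat -> jump_discontinuity eta (t k).
Proof.
  intros Hk. pose proof (t_in01 k Hk) as Htk.
  assert (Hlo : exists dl, 0 < dl /\ forall y, t k - dl < y < t k -> sig y = sgn k).
  { destruct k as [|k].
    - exists 1. split. lra. intros y Hy. apply sig_val; [lia|left; auto|right; lra].
    - exists (t (S k) - t k). split. assert (t k < t (S k)) by (apply Hinc; auto). lra.
      intros y Hy. apply sig_val; [lia|right; simpl; lra|right; lra]. }
  assert (Hhi : exists dr, 0 < dr /\ forall y, t k <= y < t k + dr -> sig y = sgn (S k)).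
  { destruct (Nat.eq_dec (S k) N) as [E|E].
    - exists 1. split. lra. intros y Hy. apply sig_val; [lia|right; simpl; lra|left; auto].
    - exists (t (S k) - t k). split. assert (t k < t (S k)) by (apply Hinc; lia). lra.
      intros y Hy. apply sig_val; [lia|right; simpl; lra|right; lra]. }
  destruct Hlo as [dl [Hdl Hl]], Hhi as [dr [Hdr Hr]].
  exists ((sgn k + t k) / 2), ((sgn (S k) + t k) / 2).
  assert (Hv : eta (t k) = (sgn (S k) + t k) / 2).
  { unfold eta. rewrite (Hr (t k)); auto. lra. }
  split; [|split; [|split]].
  - intros eps Heps. exists (Rmin (Rmin eps dl) (t k)). split.
    apply Rmin_glb_lt; [apply Rmin_glb_lt|]; lra.
    intros h Hh. assert (h < eps) by (eapply Rlt_le_trans; [apply Hh|]; eapply Rle_trans; apply Rmin_l).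
    assert (h < dl) by (eapply Rlt_le_trans; [apply Hh|]; eapply Rle_trans; [apply Rmin_l|apply Rmin_r]).
    assert (h < t k) by (eapply Rlt_le_trans; [apply Hh|]; apply Rmin_r).
    rewrite frac_id by lra. unfold eta. rewrite (Hl (t k - h)) by lra.
    apply cdist_lt, Rabs_def1; lra.
  - intros eps Heps. exists (Rmin (Rmin eps dr) (1 - t k)). split.
    apply Rmin_glb_lt; [apply Rmin_glb_lt|]; lra.
    intros h Hh. assert (h < eps) by (eapply Rlt_le_trans; [apply Hh|]; eapply Rle_trans; apply Rmin_l).
    assert (h < dr) by (eapply Rlt_le_trans; [apply Hh|]; eapply Rle_trans; [apply Rmin_l|apply Rmin_r]).
    assert (h < 1 - t k) by (eapply Rlt_le_trans; [apply Hh|]; apply Rmin_r).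
    rewrite frac_id by lra. unfold eta. rewrite (Hr (t k + h)) by lra.
    apply cdist_lt, Rabs_def1; lra.
  - apply cdist_half. rewrite sgnS. destruct (sgn01 k) as [E|E]; rewrite E; [right|left]; lra.
  - right. rewrite Hv. apply cdist_refl.
Qed.

Lemma eta_jumps : exactly_p_jump_discontinuities eta N.
Proof.
  exists (tlist N). split. apply tlist_NoDup; lia. split. apply tlist_len. split.
  - intros x Hx. apply tlist_In in Hx. destruct Hx as [i [Hi ->]]. split.
    unfold in01. pose proof (t_in01 i Hi). lra. apply eta_jump; auto.
  - intros x Hx Hnc. destruct (classic (In x (tlist N))) as [Hin|Hnin]; auto. exfalso. apply Hnc.
    apply eta_cont; auto. intros i Hi E. apply Hnin. apply tlist_In. exists i. split; auto.
Qed.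

Lemma closure_hit lo hi u beta : lo < hi -> 0 <= lo -> hi <= 1 -> lo <= u <= hi ->
  (forall z, lo <= z < hi -> sig z = beta) -> in_closure_image eta ((beta + u) / 2).
Proof.
  intros Hlh Hlo Hhi Hu Hs eps Heps.
  destruct (Rlt_dec u hi) as [Hlt|Hge].
  - exists u. split. unfold in01; lra. unfold eta. rewrite (Hs u) by lra. rewrite cdist_refl. auto.
  - set (h := Rmin eps (u - lo) / 2).
    assert (Hh : 0 < h /\ h < eps /\ h <= u - lo).
    { unfold h. pose proof (Rmin_l eps (u - lo)). pose proof (Rmin_r eps (u - lo)).
      assert (0 < Rmin eps (u - lo)) by (apply Rmin_glb_lt; lra). lra. }
    exists (u - h). split. unfold in01; lra. unfold eta. rewrite (Hs (u - h)) by lra.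
    apply cdist_lt, Rabs_def1; lra.
Qed.

End Flower.

Section Main.
Variables (m : nat) (a b : nat -> R).
Hypothesis HL : length_vector m a b.
Local Notation T := (Tl m a b).
Local Notation H := (Hl m a b).
Local Notation chi := (chiB m a b).
Local Notation PA := (psum a m).
Local Notation PB := (psum b m).

Definition ee j := psum a j + psum b j.
Definition ff j := psum a j + psum b (S j).
Definition tt k := if Nat.even k then H (ff (Nat.div2 k)) else H (ee (S (Nat.div2 k))).
Definition NN := (2 * m - 1)%nat.

Lemma tt_even j : tt (2 * j) = H (ff j).
Proof. unfold tt. rewrite Nat.even_even, Nat.div2_double. auto. Qed.
Lemma tt_odd j : tt (S (2 * j)) = H (ee (S j)).
Proof. unfold tt. rewrite Nat.div2_succ_double. replace (S (2 * j)) with (2 * j + 1)%nat by lia.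
  rewrite Nat.even_odd. auto. Qed.

Lemma loA j : (j < m)%nat -> inA m a j (psum a j).
Proof. intros Hj. split; auto. pose proof (Ha m a b HL j Hj). simpl. lra. Qed.
Lemma loB j : (j < m)%nat -> inB m a b j (PA + psum b j).
Proof. intros Hj. split; auto. pose proof (Hb m a b HL j Hj). simpl. lra. Qed.

Lemma T_loA j : (j < m)%nat -> T (psum a j) = ff j.
Proof. intros Hj. rewrite (T_A m a b HL j _ (loA j Hj)). unfold ff. lra. Qed.
Lemma T_loB j : (j < m)%nat -> T (PA + psum b j) = ee j.
Proof. intros Hj. rewrite (T_B m a b HL j _ (loB j Hj)). unfold ee. lra. Qed.

Lemma loA01 j : (j < m)%nat -> 0 <= psum a j < 1.
Proof. intros Hj. pose proof (inA_range m a b HL j _ (loA j Hj)). pose proof (Hsum m a b HL).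
  assert (0 <= PB) by (assert (psum b 0 <= PB) by (apply (pb_le m a b HL); lia); simpl in *; lra). lra. Qed.
Lemma loB01 j : (j < m)%nat -> 0 <= PA + psum b j < 1.
Proof. intros Hj. pose proof (inB_range m a b HL j _ (loB j Hj)). pose proof (Hsum m a b HL).
  assert (0 <= PA) by (assert (psum a 0 <= PA) by (apply (pa_le m a b HL); lia); simpl in *; lra). lra. Qed.

Lemma ff01 j : (j < m)%nat -> 0 <= ff j < 1.
Proof. intros Hj. rewrite <- T_loA by auto. apply (T01 m a b HL). apply loA01; auto. Qed.
Lemma ee01 j : (j < m)%nat -> 0 <= ee j < 1.
Proof. intros Hj. rewrite <- T_loB by auto. apply (T01 m a b HL). apply loB01; auto. Qed.

Lemma S1 j : (S j < m)%nat -> H (ff j) < H (ee (S j)).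
Proof.
  intros Hj. apply (sep m a b HL _ _ (psum a j) (PA + psum b (S j))).
  apply ff01; lia. apply ee01; lia. apply loA01; lia. apply loB01; lia.
  unfold ff, ee. simpl. pose proof (Ha m a b HL j ltac:(lia)). lra.
  apply T_loA; lia. apply T_loB; lia.
  rewrite (chiB_A m a b HL j _ (loA j ltac:(lia))), (chiB_B m a b HL (S j) _ (loB (S j) Hj)). lra.
Qed.

Lemma S2 j : (0 < j < m)%nat -> H (ee j) < H (ff j).
Proof.
  intros Hj. apply (sep m a b HL _ _ (PA + psum b j) (psum a j)).
  apply ee01; lia. apply ff01; lia. apply loB01; lia. apply loA01; lia.
  unfold ff, ee. simpl. pose proof (Hb m a b HL j ltac:(lia)). lra.
  apply T_loB; lia. apply T_loA; lia.
  rewrite (chiB_A m a b HL j _ (loA j ltac:(lia))), (chiB_B m a b HL j _ (loB j ltac:(lia))). lra.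
Qed.

Lemma tt_inc k : (S k < NN)%nat -> tt k < tt (S k).
Proof.
  unfold NN. intros Hk. destruct (Nat.Even_or_Odd k) as [[j ->]|[j ->]].
  - rewrite tt_even, tt_odd. apply S1. lia.
  - replace (S (2 * j + 1)) with (2 * S j)%nat by lia. replace (2 * j + 1)%nat with (S (2 * j)) by lia.
    rewrite tt_even, tt_odd. apply S2. lia.
Qed.

Lemma tt_0 : 0 < tt 0.
Proof. replace 0%nat with (2 * 0)%nat by lia. rewrite tt_even. apply (H_pos m a b HL). apply ff01. pose proof (Hm m a b HL); lia. Qed.

Lemma tt_N : tt (pred NN) < 1.
Proof. unfold NN. pose proof (Hm m a b HL). replace (pred (2 * m - 1)) with (2 * (m - 1))%nat by lia.
  rewrite tt_even. apply (H_lt1 m a b HL). apply ff01. lia. Qed.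

Lemma NN_odd : exists q, NN = S (2 * q).
Proof. exists (m - 1)%nat. unfold NN. pose proof (Hm m a b HL). lia. Qed.

Lemma H_in_closure x : in01 x -> in_closure_image (eta NN tt) (H x).
Proof.
  intros Hx. unfold in01 in Hx. pose proof (T01 m a b HL x Hx) as HTx.
  pose proof (Hsum m a b HL) as Hs.
  destruct (piece m a b HL x Hx) as [[j Hj]|[j Hj]].
  - pose proof (TA_range m a b HL j x Hj) as Hr. pose proof Hj as [Hjm _].
    rewrite (H_A m a b HL j x Hj). replace (H (T x) / 2) with ((0 + H (T x)) / 2) by lra.
    assert (Hlo : H (ff j) <= H (T x)) by (apply (H_mono m a b HL); [apply ff01; auto|auto|unfold ff; lra]).
    destruct (Nat.lt_ge_cases (S j) m) as [Hjs|Hjs].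
    + apply (closure_hit NN tt (H (ff j)) (H (ee (S j)))).
      apply S1; auto. pose proof (H_bounds m a b HL (ff j)); lra. pose proof (H_bounds m a b HL (ee (S j))); lra.
      split; auto. apply (H_mono m a b HL); [auto|apply ee01; auto|unfold ee; simpl in Hr |- *; lra].
      intros z Hz. rewrite (sig_val NN tt tt_inc (S (2 * j))). unfold sgn.
      replace (S (2 * j)) with (2 * j + 1)%nat by lia. rewrite Nat.even_odd. auto.
      unfold NN; lia. right. rewrite Nat.pred_succ. rewrite tt_even. lra. right. rewrite tt_odd. lra.
    + apply (closure_hit NN tt (H (ff j)) 1).
      apply (H_lt1 m a b HL). apply ff01; auto. pose proof (H_bounds m a b HL (ff j)); lra. lra.
      split; auto. pose proof (H_bounds m a b HL (T x)); lra.
      intros z Hz. rewrite (sig_val NN tt tt_inc (S (2 * j))). unfold sgn.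
      replace (S (2 * j)) with (2 * j + 1)%nat by lia. rewrite Nat.even_odd. auto.
      unfold NN; lia. right. rewrite Nat.pred_succ. rewrite tt_even. lra. left. unfold NN. lia.
  - pose proof (TB_range m a b HL j x Hj) as Hr. pose proof Hj as [Hjm _].
    rewrite (H_B m a b HL j x Hj). replace (1 / 2 + H (T x) / 2) with ((1 + H (T x)) / 2) by lra.
    assert (Hhi : H (T x) <= H (ff j)) by (apply (H_mono m a b HL); [auto|apply ff01; auto|unfold ff; lra]).
    assert (Hsg : sgn (2 * j) = 1) by (unfold sgn; rewrite Nat.even_even; auto).
    destruct j as [|j].
    + apply (closure_hit NN tt 0 (H (ff 0))).
      apply (H_pos m a b HL). apply ff01; auto. lra. pose proof (H_bounds m a b HL (ff 0)); lra.
      split; auto. pose proof (H_bounds m a b HL (T x)); lra.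
      intros z Hz. rewrite (sig_val NN tt tt_inc 0). reflexivity.
      lia. left; auto. right. replace 0%nat with (2 * 0)%nat by lia. rewrite tt_even. lra.
    + apply (closure_hit NN tt (H (ee (S j))) (H (ff (S j)))).
      apply S2; lia. pose proof (H_bounds m a b HL (ee (S j))); lra. pose proof (H_bounds m a b HL (ff (S j))); lra.
      split; auto. apply (H_mono m a b HL); [apply ee01; auto|auto|unfold ee; lra].
      intros z Hz. rewrite (sig_val NN tt tt_inc (2 * S j)). auto.
      unfold NN; lia. right. replace (pred (2 * S j)) with (S (2 * j)) by lia. rewrite tt_odd. lra.
      right. rewrite tt_even. lra.
Qed.

End Main.

Theorem theorem4 (m : nat) (a b : nat -> R) :
  length_vector m a b ->
  exists F : R -> Prop, is_flower (2 * m - 1)%nat F /\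
    forall x, in01 x -> F (Hl m a b x).
Proof.
  intros HL. exists (in_closure_image (eta (NN m) (tt m a b))). split.
  - exists (eta (NN m) (tt m a b)). split; [|split].
    + intros x Hx. apply eta_sel; auto.
    + apply eta_jumps. apply (tt_inc m a b HL). apply (tt_0 m a b HL). apply (tt_N m a b HL). apply (NN_odd m a b HL).
    + intros y. tauto.
  - intros x Hx. apply (H_in_closure m a b HL); auto.
Qed.
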